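(* There is no injective algebra homomorphism from $\mathbb{C}[[X_1,X_2,\dots]]$ into $\mathbb{C}[[X]]$; in particular, there is no topological (i.e. continuous, injective, homeomorphic-onto-image) algebra embedding of $\mathbb{C}[[X_1,X_2,\dots]]$ into $\mathbb{C}[[X]]$.
   Context: $\mathbb{C}[[X_1,X_2,\dots]]$ denotes the algebra of all formal power series in countably many commuting indeterminates $X_1,X_2,\dots$ with complex coefficients, i.e. formal sums $\sum_{r}\lambda_r X^r$ over finitely supported multi-indices $r=(r_1,r_2,\dots)\in(\mathbb{Z}^+)^{(\mathbb{N})}$, $X^r=\prod_i X_i^{r_i}$. It is a Fréchet algebra under the topology of coordinatewise convergence (defined by the coefficient projections). $\mathbb{C}[[X]]$ is the algebra of formal power series in one indeterminate, with the topology of coordinatewise convergence. *)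

(* Defs.v *)
(* C is modelled as R[i] for an arbitrary R : realType
   (any realType is a complete archimedean ordered field, hence R[i] ≅ ℂ). *)
From mathcomp Require Import all_boot all_order all_algebra.
From mathcomp Require Import reals.
From mathcomp Require Import complex.
Set Implicit Arguments. Unset Strict Implicit. Unset Printing Implicit Defensive.
Import GRing.Theory.
Local Open Scope ring_scope.

(* Finitely supported multi-indices r = (r_1, r_2, ...) in (Z^+)^(N),
   represented canonically as the list [r_1; ...; r_k] with no trailing zeros
   (last entry nonzero; the empty list is the zero multi-index). *)
Definition midx_canon (s : seq nat) : bool := (last 1%N s != 0%N).
Definition midx := {s : seq nat | midx_canon s}.
Definition midx0 : midx := exist _ [::] (erefl true).

Definition mnorm (s : seq nat) : seq nat :=
  rev (drop (find (fun x => x != 0%N) (rev s)) (rev s)).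
Definition mk (s : seq nat) : midx := insubd midx0 (mnorm s).

Fixpoint box (r : seq nat) : seq (seq nat) :=
  match r with
  | [::] => [:: [::]]
  | x :: r' => [seq y :: s | y <- iota 0 x.+1, s <- box r']
  end.
Definition msub (r s : seq nat) : seq nat := [seq (p.1 - p.2)%N | p <- zip r s].

Section Series.
Variable C : comRingType.

(* C[[X_1, X_2, ...]] : coefficient families indexed by multi-indices *)
Definition mser := midx -> C.
Definition madd (F G : mser) : mser := fun r => F r + G r.
Definition mscale (c : C) (F : mser) : mser := fun r => c * F r.
Definition mmul (F G : mser) : mser :=
  fun r => \sum_(s <- box (val r)) F (mk s) * G (mk (msub (val r) s)).

Definition ser := nat -> C.
Definition sadd (f g : ser) : ser := fun n => f n + g n.
Definition sscale (c : C) (f : ser) : ser := fun n => c * f n.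
Definition smul (f g : ser) : ser :=
  fun n => \sum_(i < n.+1) f i * g (n - i)%N.

Definition is_alg_hom (phi : mser -> ser) : Prop :=
  [/\ forall F G, phi (madd F G) = sadd (phi F) (phi G),
      forall c F, phi (mscale c F) = sscale c (phi F) &
      forall F G, phi (mmul F G) = smul (phi F) (phi G)].
End Series.

(* Main.v *)
Require Import Defs.
From mathcomp Require Import all_boot all_order all_algebra.
From mathcomp Require Import reals.
From mathcomp Require Import complex.
From Stdlib Require Import Classical ClassicalEpsilon FunctionalExtensionality.
From mathcomp Require Import zify.
Set Implicit Arguments. Unset Strict Implicit. Unset Printing Implicit Defensive.
Import GRing.Theory.
Local Open Scope ring_scope.

Lemma mnorm_nil : mnorm [::] = [::].
Proof. by []. Qed.

Lemma mnorm_cons x s : mnorm (x :: s) =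
  if (x == 0)%N && (mnorm s == [::]) then [::] else x :: mnorm s.
Proof.
rewrite /mnorm rev_cons -cats1 find_cat.
set p := (fun x : nat => x != 0%N).
case: ifP => hp.
- rewrite drop_cat ifT; last by rewrite -has_find.
  rewrite rev_cat /=.
  have -> : (rev (drop (find p (rev s)) (rev s)) == [::]) = false.
    apply/negbTE; rewrite -size_eq0 size_rev size_drop subn_eq0 -ltnNge -has_find //.
  by rewrite andbF.
- have -> : drop (find p (rev s)) (rev s) = [::].
    by apply/eqP; rewrite -size_eq0 size_drop hasNfind ?hp // subnn.
  rewrite drop_cat ltnNge leq_addr /= addKn.
  by rewrite /p; case: (x =P 0%N) => [->|/eqP nx] //=; rewrite (negbTE nx).
Qed.

Lemma mnorm_nilP s : (mnorm s == [::]) = all (fun x => x == 0%N) s.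
Proof.
elim: s => [//|x s IH]; rewrite mnorm_cons /=.
case: (x =P 0%N) => [->|nx] /=; first by rewrite -IH; case: ifP.
by [].
Qed.

Lemma last_cons_ne (x y : nat) s : s != [::] -> last x s = last y s.
Proof. by case: s. Qed.

Lemma mnorm_canon s : midx_canon (mnorm s).
Proof.
rewrite /midx_canon; elim: s => [//|x s IH]; rewrite mnorm_cons.
case: ifP => //= h.
case E: (mnorm s) => [|y t] /=.
  by move: h; rewrite E eqxx andbT => /negbT.
by move: IH; rewrite E.
Qed.

Lemma val_mk s : val (mk s) = mnorm s.
Proof. by rewrite /mk val_insubd mnorm_canon. Qed.

Lemma mnorm_id s : midx_canon s -> mnorm s = s.
Proof.
rewrite /midx_canon; elim: s => [//|x s IH] /= h.
rewrite mnorm_cons.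
case: s IH h => [|y t] IH h.
  by rewrite /= in h; rewrite (negbTE h).
by rewrite IH // andbF.
Qed.

Lemma mk_val r : mk (val r) = r.
Proof.
apply: val_inj; rewrite val_mk mnorm_id //; exact: valP.
Qed.

Lemma canon_behead s : midx_canon s -> midx_canon (behead s).
Proof. by rewrite /midx_canon; case: s => [|x [|y t]]. Qed.

Lemma mk_eq s t : (mk s == mk t) = (mnorm s == mnorm t).
Proof. by rewrite -!val_mk. Qed.

Lemma head_mnorm y l : head 0%N (mnorm (y :: l)) = y.
Proof. by rewrite mnorm_cons; case: ifP => //= /andP [/eqP ->]. Qed.

Lemma behead_mnorm y l : behead (mnorm (y :: l)) = mnorm l.
Proof. by rewrite mnorm_cons; case: ifP => //= /andP [_ /eqP ->]. Qed.

Lemma mk_hb (r : midx) : mk (head 0%N (val r) :: behead (val r)) = r.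
Proof.
case: r => [[|x l] h] /=.
  by apply: val_inj; rewrite val_mk.
by rewrite -[x :: l]/(val (exist _ (x :: l) h)) mk_val.
Qed.

Lemma mk_nseq0 k : mk (nseq k 0%N) = midx0.
Proof.
apply: val_inj; rewrite val_mk /=; apply/eqP; rewrite mnorm_nilP.
by elim: k.
Qed.

Definition head0 (r : midx) : nat := head 0%N (val r).
Definition allz (s : seq nat) : bool := all (fun x => x == 0%N) s.

Lemma msub_nseq0 l : msub l (nseq (size l) 0%N) = l.
Proof. by rewrite /msub; elim: l => //= x l ->; rewrite subn0. Qed.

Section Shift.
Variable C : comRingType.

Definition Xpow (T : nat) : mser C := fun r => if r == mk [:: T] then 1 else 0.

Lemma box_zero l (F : seq nat -> C) :
  \sum_(s <- box l) (if allz s then F s else 0) = F (nseq (size l) 0%N).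
Proof.
elim: l F => [|x l IH] F; first by rewrite /= big_seq1.
rewrite /= big_cat big_map big_allpairs_dep /=.
have -> : \sum_(j <- box l) (if allz (0%N :: j) then F (0%N :: j) else 0)
   = \sum_(j <- box l) (if allz j then F (0%N :: j) else 0) by [].
rewrite (IH (fun s => F (0%N :: s))) big1_seq ?addr0 // => y.
move=> /andP [_]; rewrite mem_iota => /andP [y0 _].
by apply: big1 => s _; rewrite -(prednK y0).
Qed.

Lemma sum_iota_pick x T (G : nat -> C) :
  \sum_(y <- iota 0 x.+1) (if y == T then G y else 0) = if (T <= x)%N then G T else 0.
Proof.
case: (leqP T x) => hT.
  rewrite (bigD1_seq T) ?iota_uniq ?mem_iota ?ltnS //= eqxx big1 ?addr0 //.
  by move=> y /negbTE ->.
rewrite big1_seq // => y /andP [_]; rewrite mem_iota ltnS /= => hy.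
by case: (y =P T) => // e; move: hy; rewrite e leqNgt hT.
Qed.

Lemma Xpow_cons T y s : Xpow T (mk (y :: s)) = if (y == T) && allz s then 1 else 0.
Proof.
rewrite /Xpow mk_eq !mnorm_cons mnorm_nil eqxx andbT.
have hs := mnorm_nilP s; rewrite -/(allz s) in hs.
case hz: (allz s); case: (y =P 0%N) => [->|ny]; case: (T =P 0%N) => [->|nT];
  rewrite /= ?eqseq_cons ?hs ?hz ?andbT ?andbF ?eqxx //=.
all: try by (case: (0%N =P T) => // e; case: nT).
all: try by (case: (y =P T)).
- by case: (y =P 0%N).
- by rewrite eqseq_cons hs hz andbF.
Qed.

Lemma mmul_Xpow T (Q : mser C) r :
  mmul (Xpow T) Q r = if (T <= head0 r)%N then Q (mk ((head0 r - T)%N :: behead (val r))) else 0.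
Proof.
rewrite /mmul /head0; case: r => [[|x l] h] /=.
  rewrite big_seq1 /Xpow mk_eq mnorm_nil mnorm_cons mnorm_nil eqxx andbT.
  case: (T =P 0%N) => [->|nT] /=; last by rewrite mul0r; case: T nT.
  rewrite mul1r; congr Q; apply: val_inj; rewrite !val_mk //.
change (\sum_(s <- [seq y :: s | y <- iota 0 x.+1, s <- box l]) Xpow T (mk s) * Q (mk (msub (x :: l) s)) = (if (T <= x)%N then Q (mk ((x - T)%N :: l)) else 0)).

rewrite big_allpairs_dep /=.
have -> : \sum_(y <- iota 0 x.+1) \sum_(s <- box l)
     Xpow T (mk (y :: s)) * Q (mk (msub (x :: l) (y :: s)))
   = \sum_(y <- iota 0 x.+1) (if y == T then
       \sum_(s <- box l) (if allz s then Q (mk ((x - y)%N :: msub l s)) else 0) else 0).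
  apply: eq_bigr => y _; case: (y =P T) => [->|nyT].
    by apply: eq_bigr => s _; rewrite Xpow_cons eqxx /=; case: (allz s); rewrite ?mul1r ?mul0r.
  by apply: big1 => s _; rewrite Xpow_cons; case: (y =P T) => //= _; rewrite mul0r.
rewrite sum_iota_pick; case: ifP => // _.
by rewrite (box_zero l (fun s => Q (mk ((x - T)%N :: msub l s)))) msub_nseq0.
Qed.

End Shift.

Lemma wf_min (P : nat -> Prop) : (exists n, P n) -> exists n, P n /\ forall m, P m -> (n <= m)%N.
Proof.
move=> [n Pn]; apply: NNPP => hn.
have : forall k m, (m < k)%N -> ~ P m.
  elim=> [//|k IH] m; rewrite ltnS leq_eqVlt => /orP [/eqP ->|/IH //] Pk.
  apply: hn; exists k; split => // m' Pm'; rewrite leqNgt; apply/negP => /IH; exact.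
by move/(_ n.+1 n (ltnSn n)).
Qed.

Section Main.
Variable C : fieldType.
Variable phi : mser C -> ser C.
Hypothesis hadd : forall F G, phi (madd F G) = sadd (phi F) (phi G).
Hypothesis hsc : forall c F, phi (mscale c F) = sscale c (phi F).
Hypothesis hmul : forall F G, phi (mmul F G) = smul (phi F) (phi G).
Hypothesis inj : injective phi.

Definition one : mser C := Xpow C 0.
Definition X1 : mser C := Xpow C 1.
Definition mzero : mser C := fun _ => 0.
Definition zb (f : ser C) n := forall j, (j < n)%N -> f j = 0.
Definition valat (f : ser C) n := zb f n /\ f n != 0.

Lemma smul_zb (f h : ser C) n m : zb f n -> zb h m -> zb (smul f h) (n + m).
Proof.
move=> hf hh j hj; rewrite /smul big1 // => i _.
case: (ltnP i n) => hi; first by rewrite hf ?mul0r.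
rewrite hh ?mulr0 //.
have := ltn_ord i; lia.
Qed.

Lemma smul_at (f h : ser C) n m : zb f n -> zb h m -> smul f h (n + m)%N = f n * h m.
Proof.
move=> hf hh; rewrite /smul (bigD1 (Ordinal (leq_addr m n.+1 : (n < (n + m).+1)%N))) //=.
rewrite addKn big1 ?addr0 // => i /eqP hi.
case: (ltnP i n) => hin; first by rewrite hf ?mul0r.
rewrite hh ?mulr0 //.
have : (nat_of_ord i != n) by apply/eqP => e; apply: hi; apply: val_inj.
have := ltn_ord i; lia.
Qed.

Lemma smul0 (f h : ser C) : smul f h 0%N = f 0%N * h 0%N.
Proof. by rewrite /smul big_ord1. Qed.

Lemma phi0 : phi mzero = fun _ => 0.
Proof.
have -> : mzero = mscale 0 mzero by apply: functional_extensionality => r; rewrite /mscale mul0r.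
by rewrite hsc; apply: functional_extensionality => n; rewrite /sscale mul0r.
Qed.

Lemma mmul_one Q : mmul one Q = Q.
Proof.
apply: functional_extensionality => r; rewrite mmul_Xpow subn0 /=.
by rewrite -/(head0 r) mk_hb.
Qed.

Lemma mk0 : mk [:: 0%N] = midx0.
Proof. by apply: val_inj; rewrite val_mk. Qed.

Lemma one_ne0 : one <> mzero.
Proof.
move=> h; have := congr1 (fun F => F midx0) h.
rewrite /one /Xpow /mzero mk0 eqxx => /eqP; by rewrite oner_eq0.
Qed.

Definition ee0 := phi one.

Lemma e0 : ee0 0%N = 1.
Proof.
have hee : ee0 = smul ee0 ee0 by rewrite /ee0 -hmul mmul_one.
have hx : ee0 0%N * ee0 0%N = ee0 0%N by rewrite -smul0 -hee.
case: (ee0 0%N =P 0) => h0; last first.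
  have nz : ee0 0%N != 0 by apply/eqP.
  by apply: (mulIf nz); rewrite hx mul1r.
exfalso.
have zk : forall k, zb ee0 k.+1.
  elim=> [|k IH]; first by move=> j; rewrite ltnS leqn0 => /eqP ->.
  move=> j hj; rewrite hee; apply: (smul_zb IH IH); lia.
have ez : forall j, ee0 j = 0 by move=> j; apply: (zk j).
apply: one_ne0; apply: inj; rewrite phi0.
apply: functional_extensionality => n.
rewrite -[in LHS](mmul_one one) hmul -/ee0 /smul big1 // => i _.
by rewrite ez mul0r.
Qed.

Definition gg := phi X1.

Lemma head0_mk y l : head0 (mk (y :: l)) = y.
Proof. by rewrite /head0 val_mk head_mnorm. Qed.

Lemma behead_mk y l : behead (val (mk (y :: l))) = mnorm l.
Proof. by rewrite val_mk behead_mnorm. Qed.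

Lemma behead_canon (r : midx) : mnorm (behead (val r)) = behead (val r).
Proof. by apply: mnorm_id; apply: canon_behead; apply: valP. Qed.

Lemma g0 : gg 0%N = 0.
Proof.
set lam := gg 0%N.
case: (lam =P 0) => // /eqP nl; exfalso.
pose q (n : nat) : C := - (lam^-1) ^+ n.+1.
pose U : mser C := fun r => if behead (val r) == [::] then q (head0 r) else 0.
have key : madd (mmul X1 U) (mscale (- lam) (mmul one U)) = one.
  apply: functional_extensionality => r.
  rewrite mmul_one /madd /mscale mmul_Xpow /U head0_mk behead_mk behead_canon.
  rewrite /one /Xpow.
  case: r => [[|x l] h]; rewrite /head0 /=.
  - have -> : exist _ [::] h = mk [:: 0%N] by apply: val_inj; rewrite val_mk.
    by rewrite eqxx add0r /q expr1 mulrNN divff.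
  - rewrite -val_eqE val_mk /=.
    case: l h => [|y l] h /=; last by rewrite mulr0 addr0; case: ifP.
    have x0 : (0 < x)%N by rewrite lt0n; move: h; rewrite /midx_canon.
    rewrite x0 /q -(prednK x0) subn1 /= [in X in _ + X]exprS.
    by rewrite mulrNN mulrA divff // mul1r addNr.
have := congr1 (fun f => f 0%N) (congr1 phi key).
rewrite hadd hsc hmul hmul -/ee0 -/gg /sadd /sscale !smul0 e0 mul1r.
by rewrite -/lam mulNr addrN => /eqP; rewrite eq_sym oner_eq0.
Qed.

Lemma Xpow_S i : Xpow C i.+1 = mmul X1 (Xpow C i).
Proof.
apply: functional_extensionality => r.
rewrite mmul_Xpow Xpow_cons.
have hz : allz (behead (val r)) = (behead (val r) == [::]).
  by rewrite /allz -mnorm_nilP behead_canon.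
rewrite hz /Xpow -val_eqE val_mk mnorm_cons /= /head0.
case: r hz => [[|x l] h] /= hz //.
case: x {h} => [|x] //=.
by rewrite subn1 /= eqseq_cons.
Qed.

Lemma phiXpow a i : valat gg a -> valat (phi (Xpow C i)) (i * a) /\ phi (Xpow C i) (i * a)%N = gg a ^+ i.
Proof.
move=> [za na]; elim: i => [|i [[IHz IHn] IH2]].
  rewrite mul0n -/one -/ee0 e0 expr0; split => //; split => //; by rewrite e0 oner_eq0.
rewrite Xpow_S hmul -/gg mulSn.
have hz := smul_zb za IHz.
rewrite smul_at // IH2 exprS; split => //; split => //.
by rewrite smul_at // IH2 mulf_neq0 // expf_neq0.
Qed.

Definition Kprop a rho (K : mser C) (e : nat) :=
  forall F m, valat (phi F) m -> (m %% a)%N = rho ->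
    [/\ valat (phi K) e, (e %% a)%N = rho & (e <= m)%N].

Lemma Kprop_ex a rho : exists p : mser C * nat, Kprop a rho p.1 p.2.
Proof.
case: (classic (exists m, exists F, valat (phi F) m /\ (m %% a)%N = rho)) => hex.
  have [m0 [[F0 [hF0 hm0]] hmin]] := wf_min hex.
  exists (F0, m0) => F m hF hm /=; split => //.
  by apply: hmin; exists F.
exists (mzero, 0%N) => F m hF hm; exfalso; apply: hex; exists m, F; by split.
Qed.

Section Greedy.
Variable a : nat.
Variable K : nat -> mser C.
Variable ee : nat -> nat.
Hypothesis ha : valat gg a.
Hypothesis a_pos : (0 < a)%N.
Hypothesis hK : forall rho, Kprop a rho (K rho) (ee rho).

Definition ii m := ((m - ee (m %% a)) %/ a)%N.
Definition term m := mmul (Xpow C (ii m)) (K (m %% a)).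

Fixpoint Dn (H : mser C) n : mser C :=
  match n with
  | 0 => H
  | n'.+1 => let D := Dn H n' in
      madd D (mscale (- (phi D n' / phi (term n') n')) (term n'))
  end.

Definition cc H n := phi (Dn H n) n / phi (term n) n.

Lemma Dn_S H n : Dn H n.+1 = madd (Dn H n) (mscale (- cc H n) (term n)).
Proof. by []. Qed.

Lemma Dn_zb H n : zb (phi (Dn H n)) n.
Proof.
elim: n => [|n IH]; first by [].
rewrite Dn_S hadd hsc => j hj; rewrite /sadd /sscale.
case: (phi (Dn H n) n =P 0) => hn.
  rewrite /cc hn mul0r oppr0 mul0r addr0.
  by move: hj; rewrite ltnS leq_eqVlt => /orP [/eqP ->|/IH].
have hv : valat (phi (Dn H n)) n by split => //; apply/eqP.
have [[kz kn] km kle] := hK hv (erefl _).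
have hvx := phiXpow (ii n) ha.
have ht : (ii n * a + ee (n %% a))%N = n.
  rewrite /ii divnK ?subnK //.
  by rewrite -eqn_mod_dvd // km.
have hz0 := smul_zb (proj1 (proj1 hvx)) kz.
have hat := smul_at (proj1 (proj1 hvx)) kz.
rewrite ht in hz0 hat.
have tz : zb (phi (term n)) n by rewrite /term hmul.
have tn : phi (term n) n != 0.
  by rewrite /term hmul hat (proj2 hvx) mulf_neq0 // expf_neq0 //; case: ha.
move: hj; rewrite ltnS leq_eqVlt => /orP [/eqP ->|hjn].
  by rewrite /cc mulNr divfK // addrN.
by rewrite IH // tz // mulr0 addr0.
Qed.

Definition EE := (\max_(rho < a) ee rho)%N.

Lemma ee_le m : (ee (m %% a) <= EE)%N.
Proof. exact: (leq_bigmax (F := fun rho : 'I_a => ee rho) (Ordinal (ltn_pmod m a_pos))). Qed.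

Lemma term_far m r : (EE + a * (head0 r).+1 <= m)%N -> term m r = 0.
Proof.
move=> hm; rewrite /term mmul_Xpow ifF //.
apply/negbTE; rewrite -ltnNge /ii.
have h1 : (a * (head0 r).+1 <= m - ee (m %% a))%N.
  have := ee_le m; lia.
have := leq_div2r a h1; rewrite mulKn //.
Qed.

Lemma Dn_stab H r n k : (EE + a * (head0 r).+1 <= n)%N -> Dn H (n + k) r = Dn H n r.
Proof.
move=> hn; elim: k => [|k IH]; first by rewrite addn0.
rewrite addnS Dn_S /madd /mscale term_far ?mulr0 ?addr0 //.
by apply: leq_trans hn (leq_addr _ _).
Qed.

Definition DD H : mser C := fun r => Dn H (EE + a * (head0 r).+1) r.

Lemma DD_tail H T r : (head0 r < T)%N -> DD H r = Dn H (EE + a * T) r.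
Proof.
move=> hT; rewrite /DD.
have hle : (EE + a * (head0 r).+1 <= EE + a * T)%N by rewrite leq_add2l leq_mul2l hT orbT.
by rewrite -(subnKC hle) (@Dn_stab H r (EE + a * (head0 r).+1)).

Qed.

Lemma phiDD H : phi (DD H) = fun _ => 0.
Proof.
apply: functional_extensionality => j.
set T := j.+1.
set F := madd (DD H) (mscale (-1) (Dn H (EE + a * T))).
pose Q : mser C := fun r => F (mk ((head0 r + T)%N :: behead (val r))).
have hF : F = mmul (Xpow C T) Q.
  apply: functional_extensionality => r; rewrite mmul_Xpow.
  case: ifP => hT.
    by rewrite /Q head0_mk behead_mk mnorm_id ?subnK // -?/(head0 r) ?mk_hb //; apply: canon_behead; apply: valP.
  by rewrite /F /madd /mscale (@DD_tail H T r) ?mulN1r ?addrN // ltnNge hT.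
have hx := phiXpow T ha.
have z0 : zb (phi Q) 0 by move=> ?.
have hz := smul_zb (proj1 (proj1 hx)) z0.
have h1 : phi F j = 0.
  rewrite hF hmul; apply: hz; rewrite addn0 /T; have := a_pos; nia.
have h2 : phi (Dn H (EE + a * T)) j = 0 by apply: Dn_zb; rewrite /T; have := a_pos; nia.
move: h1; rewrite /F hadd hsc /sadd /sscale h2 mulr0 addr0 => ->.
by [].
Qed.

Lemma DD_zero H : DD H = mzero.
Proof. by apply: inj; rewrite phiDD phi0. Qed.

Lemma Dn_expand H n r : Dn H n r = H r - \sum_(m < n) cc H m * term m r.
Proof.
elim: n => [|n IH]; first by rewrite big_ord0 subr0.
by rewrite Dn_S /madd /mscale IH big_ord_recr /= mulNr opprD addrA.
Qed.

Definition ev l : midx := mk (nseq l.+1 0%N ++ [:: 1%N]).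

Lemma val_ev l : val (ev l) = nseq l.+1 0%N ++ [:: 1%N].
Proof. by rewrite val_mk mnorm_id // /midx_canon last_cat. Qed.

Lemma head0_ev l : head0 (ev l) = 0%N.
Proof. by rewrite /head0 val_ev. Qed.

Lemma ev_eq l j : (ev l == ev j) = (l == j).
Proof.
rewrite -val_eqE !val_ev; apply/eqP/eqP => [h|->] //.
by have := congr1 size h; rewrite !size_cat !size_nseq => /addIn [].
Qed.

Lemma term_ev m j : term m (ev j) = if ii m == 0%N then K (m %% a) (ev j) else 0.
Proof.
rewrite /term mmul_Xpow head0_ev leqn0; case: eqP => // ->.
by rewrite subn0 -(head0_ev j) mk_hb.
Qed.

Lemma regroup N (y : nat -> C) (f : nat -> C) :
  \sum_(m < N) y m * f (m %% a)%N = \sum_(rho < a) (\sum_(m < N | (m %% a)%N == rho) y m) * f rho.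
Proof.
under [RHS]eq_bigr => rho _ do rewrite mulr_suml.
rewrite (exchange_big_dep xpredT) //=; apply: eq_bigr => m _.
rewrite (big_pred1 (Ordinal (ltn_pmod m a_pos))) //.
Qed.

Definition Hv l : mser C := fun r => if r == ev l then 1 else 0.

Lemma greedy_false : False.
Proof.
pose N := (EE + a * 1)%N.
have key : forall l j, (l == j)%:R = \sum_(m < N) cc (Hv l) m * term m (ev j).
  move=> l j.
  have := congr1 (fun F => F (ev j)) (DD_zero (Hv l)).
  rewrite /DD head0_ev Dn_expand /mzero /Hv ev_eq => /eqP; rewrite subr_eq0 => /eqP <-.
  by case: (l =P j) => [->|/eqP h]; rewrite ?eqxx // eq_sym (negbTE h).
pose P := \matrix_(l < a.+1, rho < a)
   \sum_(m < N | (m %% a)%N == rho) (cc (Hv l) m * (if ii m == 0%N then 1 else 0)).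
pose Em := \matrix_(rho < a, j < a.+1) K rho (ev j).
have hm : (1%:M : 'M[C]_a.+1) = P *m Em.
  apply/matrixP => l j; rewrite !mxE key.
  have -> : \sum_(m < N) cc (Hv l) m * term m (ev j) =
     \sum_(m < N) (cc (Hv l) m * (if ii m == 0%N then 1 else 0)) * K (m %% a)%N (ev j).
    apply: eq_bigr => m _; rewrite term_ev; case: ifP => _; by rewrite ?mulr1 ?mulr0 ?mul0r.
  rewrite (regroup N (fun m => cc (Hv l) m * (if ii m == 0%N then 1 else 0)) (fun rho => K rho (ev j))).
  by apply: eq_bigr => rho _; rewrite !mxE.
have := mxrankM_maxl P Em; rewrite -hm mxrank1 => h.
have := rank_leq_col P; have := h; lia.
Qed.

End Greedy.

Lemma main_false : False.
Proof.
have gnz : exists j, gg j != 0.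
  apply: NNPP => hn.
  have hz : gg = phi mzero.
    rewrite phi0; apply: functional_extensionality => j.
    by apply/eqP; apply: negbNE; apply/negP => hj; apply: hn; exists j.
  have := congr1 (fun F => F (mk [:: 1%N])) (inj hz).
  by rewrite /X1 /Xpow /mzero eqxx => /eqP; rewrite oner_eq0.
case: (ex_minnP gnz) => a hna hmin.
have ha : valat gg a.
  split => // j hj; apply/eqP; apply: negbNE; apply/negP => hj'.
  by have := hmin j hj'; rewrite leqNgt hj.
have apos : (0 < a)%N.
  by rewrite lt0n; apply/negP => /eqP h; move: hna; rewrite h g0 eqxx.
pose hch := fun rho => constructive_indefinite_description _ (Kprop_ex a rho).
have hK : forall rho, Kprop a rho (sval (hch rho)).1 (sval (hch rho)).2.
  by move=> rho; exact: (svalP (hch rho)).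
exact: (greedy_false ha apos hK).
Qed.

End Main.

Lemma no_inj_hom (C : fieldType) :
  ~ exists phi : mser C -> ser C, is_alg_hom phi /\ injective phi.
Proof.
move=> [phi [[hadd hsc hmul] inj]].
exact: (main_false hadd hsc hmul inj).
Qed.

Local Open Scope complex_scope.

Theorem theorem1p1 (R : realType) :
  ~ exists phi : mser R[i] -> ser R[i], is_alg_hom phi /\ injective phi.
Proof. exact: no_inj_hom. Qed.
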